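(* Let $\Lambda=K\mathcal{Q}/I$ be a finite-dimensional algebra over a field $K$ as in the context, let $A\geqslant1$ and let $\tilde{\Lambda}_A=K\tilde{\mathcal{Q}}_A/\tilde{I}_A$ be its stretched algebra. Let $m_0$ be the number of vertices and $m_1$ the number of arrows of $\mathcal{Q}$. Then: (1) $\tilde{\Lambda}_A$ is a finite-dimensional algebra; (2) $\tilde{\mathcal{Q}}_A$ has $m_0+m_1(A-1)$ vertices and $m_1A$ arrows; (3) $\{\tilde{g}^2_1,\dots,\tilde{g}^2_m\}$, where $\tilde{g}^2_i=\theta^*(g^2_i)$, is a minimal generating set of uniform elements for $\tilde{I}_A$; (4) if $I$ is generated by length homogeneous elements, then $\tilde{I}_A$ is generated by length homogeneous elements; (5) if $I$ is generated by length homogeneous elements all of length $d$, then $\tilde{I}_A$ is generated by length homogeneous elements all of length $dA$; (6) if $\Lambda$ is a monomial algebra, then $\tilde{\Lambda}_A$ is a monomial algebra.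
   Context: Conventions: $\mathcal{Q}$ is a finite quiver; $\mathfrak{o}(\alpha)$, $\mathfrak{t}(\alpha)$ denote start and end of an arrow; paths are written left to right. An element $x\in K\mathcal{Q}$ is uniform if $x=vx=xv'$ for vertices $v,v'$. $\Lambda=K\mathcal{Q}/I$ is finite-dimensional with $I$ an admissible ideal generated by a minimal set $g^2=\{g^2_1,\dots,g^2_m\}$ of uniform elements. An element of a path algebra is length homogeneous if it is a linear combination of paths all of the same length. $K\mathcal{Q}/I$ is monomial if $I$ is generated by paths. Stretched algebra: for $A\geqslant1$, the quiver $\tilde{\mathcal{Q}}_A$ has all vertices of $\mathcal{Q}$ plus, for each arrow $\alpha$ of $\mathcal{Q}$, new vertices $w_1,\dots,w_{A-1}$; each arrow $\alpha$ is replaced by arrows $\alpha_1,\dots,\alpha_A$ with $\mathfrak{o}(\alpha_1)=\mathfrak{o}(\alpha)$, $\mathfrak{t}(\alpha_j)=\mathfrak{o}(\alpha_{j+1})=w_j$ ($1\le j\le A-1$), $\mathfrak{t}(\alpha_A)=\mathfrak{t}(\alpha)$, and the only arrows incident with $w_j$ are $\alpha_j,\alpha_{j+1}$. $\theta^*:K\mathcal{Q}\to K\tilde{\mathcal{Q}}_A$ is the algebra homomorphism fixing vertices and sending $\alpha\mapsto\alpha_1\cdots\alpha_A$; $\tilde{I}_A$ is the ideal generated by $\theta^*(g^2_1),\dots,\theta^*(g^2_m)$; $\tilde{\Lambda}_A=K\tilde{\mathcal{Q}}_A/\tilde{I}_A$. *)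

(* Defs.v *)
From HB Require Import structures.
From mathcomp Require Import all_boot all_algebra.
Set Implicit Arguments. Unset Strict Implicit. Unset Printing Implicit Defensive.
Import GRing.Theory.
Local Open Scope ring_scope.

Record quiver := Quiver {
  qV : finType; qE : finType; qsrc : qE -> qV; qtgt : qE -> qV }.

(** A (candidate) path is a start vertex together with the list of its arrows,
    read left to right.  Trivial paths are (v, [::]). *)
Notation qpath Q := (qV Q * seq (qE Q))%type.

Fixpoint compat (Q : quiver) (v : qV Q) (s : seq (qE Q)) : bool :=
  match s with
  | [::] => true
  | a :: s' => (qsrc a == v) && compat (qtgt a) s'
  end.

Definition valid (Q : quiver) (p : qpath Q) : bool := compat p.1 p.2.

Definition pend (Q : quiver) (v : qV Q) (s : seq (qE Q)) : qV Q :=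
  last v (map (@qtgt Q) s).

Definition plen (Q : quiver) (p : qpath Q) : nat := size p.2.

(** Elements of the path algebra KQ are coefficient functions on paths,
    vanishing outside a finite set of (valid) paths. *)
Definition elt (K : fieldType) (Q : quiver) := qpath Q -> K.

Definition is_elt (K : fieldType) (Q : quiver) (f : elt K Q) : Prop :=
  (forall p, ~~ valid p -> f p = 0) /\
  exists r : seq (qpath Q), forall p, f p != 0 -> p \in r.

Definition pmul (K : fieldType) (Q : quiver) (f g : elt K Q) : elt K Q :=
  fun p => \sum_(i < (size p.2).+1)
             f (p.1, take i p.2) * g (pend p.1 (take i p.2), drop i p.2).

Definition pth (K : fieldType) (Q : quiver) (p : qpath Q) : elt K Q :=
  fun q => (q == p)%:R.

Definition vtx (K : fieldType) (Q : quiver) (v : qV Q) : elt K Q :=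
  pth K (v, [::]).

Definition gen_ideal (K : fieldType) (Q : quiver) (S : elt K Q -> Prop)
  (f : elt K Q) : Prop :=
  exists (n : nat) (c : 'I_n -> K) (l r : 'I_n -> qpath Q) (s : 'I_n -> elt K Q),
    (forall i, [/\ valid (l i), valid (r i) & S (s i)]) /\
    forall q, f q = \sum_(i < n) c i * pmul (pmul (pth K (l i)) (s i)) (pth K (r i)) q.

Definition generates (K : fieldType) (Q : quiver) (S I : elt K Q -> Prop) : Prop :=
  forall f, I f <-> gen_ideal S f.

Definition range_of (K : fieldType) (Q : quiver) (m : nat) (g : 'I_m -> elt K Q)
  : elt K Q -> Prop := fun x => exists i, x = g i.

Definition uniform (K : fieldType) (Q : quiver) (x : elt K Q) : Prop :=
  exists v v' : qV Q,
    (forall q, x q = pmul (vtx K v) x q) /\ (forall q, x q = pmul x (vtx K v') q).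

Definition minimal_gen (K : fieldType) (Q : quiver) (m : nat) (g : 'I_m -> elt K Q)
  : Prop :=
  forall T : {set 'I_m}, T != setT ->
    ~ generates (fun x => exists2 i, i \in T & x = g i) (gen_ideal (range_of g)).

(** J^N, J the arrow ideal: elements supported on paths of length >= N *)
Definition Jpow (K : fieldType) (Q : quiver) (N : nat) (f : elt K Q) : Prop :=
  forall p, f p != 0 -> (N <= plen p)%N.

Definition admissible (K : fieldType) (Q : quiver) (I : elt K Q -> Prop) : Prop :=
  (exists N, (2 <= N)%N /\ forall f, is_elt f -> Jpow N f -> I f) /\
  (forall f, I f -> Jpow 2 f).

Definition findim_quot (K : fieldType) (Q : quiver) (I : elt K Q -> Prop) : Prop :=
  exists (n : nat) (b : 'I_n -> elt K Q), (forall i, is_elt (b i)) /\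
    forall f, is_elt f -> exists c : 'I_n -> K,
      I (fun q => f q - \sum_(i < n) c i * b i q).

Definition lhom_of (K : fieldType) (Q : quiver) (d : nat) (x : elt K Q) : Prop :=
  forall p, x p != 0 -> plen p = d.
Definition lhom (K : fieldType) (Q : quiver) (x : elt K Q) : Prop :=
  exists d, lhom_of d x.

Definition lhom_generated (K : fieldType) (Q : quiver) (I : elt K Q -> Prop) : Prop :=
  exists S : elt K Q -> Prop, (forall x, S x -> is_elt x /\ lhom x) /\ generates S I.
Definition lhom_generated_of (K : fieldType) (Q : quiver) (d : nat)
  (I : elt K Q -> Prop) : Prop :=
  exists S : elt K Q -> Prop, (forall x, S x -> is_elt x /\ lhom_of d x) /\ generates S I.

Definition monomial_ideal (K : fieldType) (Q : quiver) (I : elt K Q -> Prop) : Prop :=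
  exists S : elt K Q -> Prop,
    (forall x, S x -> exists p, valid p /\ x = pth K p) /\ generates S I.

(** new vertices: w_j (1 <= j <= A-1) for arrow a is inr (a, j-1).
    smid a k = the vertex reached after the first k of the arrows a_1..a_A. *)
Definition smid (Q : quiver) (A : nat) (a : qE Q) (k : nat)
  : (qV Q + (qE Q * 'I_A.-1))%type :=
  if k == 0%N then inl (qsrc a)
  else if @insub _ (fun j => j < A.-1)%N _ k.-1 is Some i then inr (a, i)
  else inl (qtgt a).

(** arrow (a, j) with j : 'I_A stands for a_(j+1) *)
Definition stretch (Q : quiver) (A : nat) : quiver :=
  @Quiver (qV Q + (qE Q * 'I_A.-1))%type (qE Q * 'I_A)%type
    (fun e => smid A e.1 e.2) (fun e => smid A e.1 e.2.+1).

Definition theta_path (Q : quiver) (A : nat) (p : qpath Q) : qpath (stretch Q A) :=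
  (inl p.1, flatten [seq [seq (a, j) | j <- enum 'I_A] | a <- p.2]).

(** theta^* : KQ -> K Q~_A, the linear (indeed algebra) extension of theta_path:
    the coefficient of a path q of Q~_A is that of its (unique, since theta_path
    is injective) preimage, if any, and 0 otherwise. *)
Definition thetaS (K : fieldType) (Q : quiver) (A : nat) (f : elt K Q)
  : elt K (stretch Q A) :=
  fun q => match q.1 with
           | inl v => let p := (v, [seq x.1 | x <- q.2 & val x.2 == 0%N]) in
                      if theta_path A p == q then f p else 0
           | inr _ => 0
           end.

(* Main.v *)
Require Import Defs.
From mathcomp Require Import all_boot all_algebra.
From Stdlib Require Import Classical FunctionalExtensionality.
From mathcomp Require Import zify.
Set Implicit Arguments. Unset Strict Implicit. Unset Printing Implicit Defensive.
Import GRing.Theory.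
Local Open Scope ring_scope.

Lemma catsI (T : eqType) (s t1 t2 : seq T) : s ++ t1 = s ++ t2 -> t1 = t2.
Proof. by elim: s => //= x s IH [] /IH. Qed.

Lemma catIs (T : eqType) (s t1 t2 : seq T) : t1 ++ s = t2 ++ s -> t1 = t2.
Proof.
move=> E; have Hs : size t1 = size t2.
  by move: (congr1 size E); rewrite !size_cat => /eqP; rewrite eqn_add2r => /eqP.
by move/eqP: E; rewrite eqseq_cat // => /andP[/eqP].
Qed.

Section Gen.
Variable K : fieldType.
Variable Q : quiver.

Implicit Types (l r w : qpath Q) (x : elt K Q).

Lemma pend_cat (v : qV Q) s1 s2 : pend v (s1 ++ s2) = pend (pend v s1) s2.
Proof. by rewrite /pend map_cat last_cat. Qed.

Lemma pend_cons (v : qV Q) a s : pend v (a :: s) = pend (qtgt a) s.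
Proof. by []. Qed.

Lemma compat_cat (v : qV Q) s1 s2 :
  compat v (s1 ++ s2) = compat v s1 && compat (pend v s1) s2.
Proof. by elim: s1 v => //= a s1 IH v; rewrite IH andbA. Qed.

Definition RL l x r : elt K Q := pmul (pmul (pth K l) x) (pth K r).

Lemma pmulL_in l x u : pmul (pth K l) x (l.1, l.2 ++ u) = x (pend l.1 l.2, u).
Proof.
case: l => lv ls /=; rewrite /pmul /=.
have Hi : (size ls < (size (ls ++ u)).+1)%N by rewrite size_cat ltnS leq_addr.
rewrite (bigD1 (Ordinal Hi)) //= take_size_cat // drop_size_cat // /pth eqxx mul1r.
rewrite big1 ?addr0 // => i /eqP Hne.
rewrite /pth; case: eqP => [[E]|]; last by rewrite mul0r.
exfalso; apply: Hne; apply: val_inj => /=.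
move: (congr1 size E); rewrite size_take_min => <-.
by apply/esym/minn_idPl; rewrite -ltnS (ltn_ord i).
Qed.

Lemma pmulL_out l x w : (forall u, w <> (l.1, l.2 ++ u)) -> pmul (pth K l) x w = 0.
Proof.
case: l => lv ls /=; case: w => wv ws /= H; rewrite /pmul /=.
rewrite big1 // => i _; rewrite /pth; case: eqP => [[E1 E2]|]; last by rewrite mul0r.
by exfalso; apply: (H (drop i ws)); rewrite -E1 -E2 cat_take_drop.
Qed.

Lemma pmulR_in x r (v : qV Q) u :
  pmul x (pth K r) (v, u ++ r.2) = (pend v u == r.1)%:R * x (v, u).
Proof.
case: r => rv rs /=; rewrite /pmul /=.
have Hi : (size u < (size (u ++ rs)).+1)%N by rewrite size_cat ltnS leq_addr.
rewrite (bigD1 (Ordinal Hi)) //= take_size_cat // drop_size_cat // /pth.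
rewrite xpair_eqE eqxx andbT mulrC.
rewrite big1 ?addr0 // => i /eqP Hne.
case: eqP => [[E1 E]|]; last by rewrite mulr0.
exfalso; apply: Hne; apply: val_inj => /=.
have Hle : (i <= size u + size rs)%N by rewrite -size_cat -ltnS ltn_ord.
move: (congr1 size E); rewrite size_drop => E'.
move: E' Hle; move: (nat_of_ord i) => k; rewrite size_cat => E' Hle.
by have := subnK Hle; rewrite E' addnC => /eqP; rewrite eqn_add2r => /eqP.
Qed.

Lemma pmulR_out x r w : (forall u, w.2 <> u ++ r.2) -> pmul x (pth K r) w = 0.
Proof.
case: r => rv rs /=; case: w => wv ws /= H; rewrite /pmul /=.
rewrite big1 // => i _; rewrite /pth; case: eqP => [[E1 E2]|]; last by rewrite mulr0.
by exfalso; apply: (H (take i ws)); rewrite -E2 cat_take_drop.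
Qed.

Lemma RL_in l x r u :
  RL l x r (l.1, l.2 ++ u ++ r.2) =
  (pend (pend l.1 l.2) u == r.1)%:R * x (pend l.1 l.2, u).
Proof. by rewrite /RL catA pmulR_in pmulL_in pend_cat. Qed.

Lemma RL_out l x r w : (forall u, w <> (l.1, l.2 ++ u ++ r.2)) -> RL l x r w = 0.
Proof.
case: w => wv ws H; rewrite /RL.
case: (classic (exists u', ws = u' ++ r.2)) => [[u' E]|N]; last first.
  by apply: pmulR_out => u /= E; apply: N; exists u.
rewrite E pmulR_in.
case: (classic (exists u'', (wv, u') = (l.1, l.2 ++ u''))) => [[u'' [E1 E2]]|N].
  by exfalso; apply: (H u''); rewrite E E2 E1 catA.
by rewrite pmulL_out ?mulr0 // => u E'; apply: N; exists u.
Qed.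

Lemma RL_cases l r w :
  (exists u, w = (l.1, l.2 ++ u ++ r.2)) \/ (forall u, w <> (l.1, l.2 ++ u ++ r.2)).
Proof.
case: (classic (exists u, w = (l.1, l.2 ++ u ++ r.2))) => [H|N]; [by left|right].
by move=> u E; apply: N; exists u.
Qed.

Lemma RL_cong l x y r w : (forall q, x q = y q) -> RL l x r w = RL l y r w.
Proof.
move=> H; case: (RL_cases l r w) => [[u ->]|N]; first by rewrite !RL_in H.
by rewrite !RL_out.
Qed.

Lemma RL_lin l r n (c : 'I_n -> K) (F : 'I_n -> elt K Q) w :
  RL l (fun q => \sum_(i < n) c i * F i q) r w = \sum_(i < n) c i * RL l (F i) r w.
Proof.
case: (RL_cases l r w) => [[u ->]|N].
  rewrite RL_in mulr_sumr; apply: eq_bigr => i _; by rewrite RL_in mulrCA.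
by rewrite RL_out // big1 // => i _; rewrite RL_out // mulr0.
Qed.

Lemma RL_comp l l' s r' r w :
  RL l (RL l' s r') r w =
  if (pend l.1 l.2 == l'.1) && (pend r'.1 r'.2 == r.1)
  then RL (l.1, l.2 ++ l'.2) s (r'.1, r'.2 ++ r.2) w else 0.
Proof.
case: (RL_cases l r w) => [[u ->]|N].
  rewrite RL_in.
  case: (RL_cases l' r' (pend l.1 l.2, u)) => [[u' Eu]|N2].
    rewrite Eu RL_in; case: Eu => E1 E2; rewrite E1 eqxx /= E2.
    have -> : l.2 ++ (l'.2 ++ u' ++ r'.2) ++ r.2 = (l.2 ++ l'.2) ++ u' ++ (r'.2 ++ r.2).
      by rewrite !catA.
    rewrite (RL_in (l.1, l.2 ++ l'.2)) /= !pend_cat E1.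
    case: (eqVneq (pend (pend l'.1 l'.2) u') r'.1) => [E|ne].
      by rewrite E mul1r; case: ifP => _; rewrite ?mul1r ?mul0r.
    by rewrite !mul0r mulr0; case: ifP.
  rewrite (RL_out s N2) mulr0; case: ifP => // /andP[/eqP E1 _].
  apply: esym; apply: RL_out => u' [E2]; apply: (N2 u'); rewrite E1; congr pair.
  by move: E2; rewrite -!catA => /catsI; rewrite !catA => /catIs ->; rewrite -!catA.
rewrite RL_out //; case: ifP => // _; apply: esym; apply: RL_out => u' Ew.
by apply: (N (l'.2 ++ u' ++ r'.2)); rewrite Ew /= -!catA.
Qed.

Lemma RL_triv (v v' : qV Q) x w :
  RL (v, [::]) x (v', [::]) w = ((w.1 == v) && (pend w.1 w.2 == v'))%:R * x w.
Proof.
case: w => wv ws /=; case: (eqVneq wv v) => [->|ne] /=.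
  by have := RL_in (v, [::]) x (v', [::]) ws; rewrite /= cats0 => ->.
rewrite mul0r RL_out // => u [E]; by rewrite E eqxx in ne.
Qed.

Implicit Types (S : elt K Q -> Prop) (f : elt K Q).

Lemma gen_ext S f f' : (forall q, f q = f' q) -> gen_ideal S f -> gen_ideal S f'.
Proof.
move=> H [n [c [l [r [s [H1 H2]]]]]]; exists n, c, l, r, s; split => // q.
by rewrite -H.
Qed.

Lemma gen0 S : gen_ideal S (fun _ => 0).
Proof.
pose e (i : 'I_0) : False := Bool.diff_false_true (ltn_ord i).
exists 0%N, (fun _ => 0), (fun i => False_rect _ (e i)), (fun i => False_rect _ (e i)),
  (fun i => False_rect _ (e i)); split; first by move=> i; case: (e i).
by move=> q; rewrite big_ord0.
Qed.

Lemma gen_add S f1 f2 :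
  gen_ideal S f1 -> gen_ideal S f2 -> gen_ideal S (fun q => f1 q + f2 q).
Proof.
move=> [n1 [c1 [l1 [r1 [s1 [H1 E1]]]]]] [n2 [c2 [l2 [r2 [s2 [H2 E2]]]]]].
exists (n1 + n2)%N,
  (fun i => match split i with inl j => c1 j | inr j => c2 j end),
  (fun i => match split i with inl j => l1 j | inr j => l2 j end),
  (fun i => match split i with inl j => r1 j | inr j => r2 j end),
  (fun i => match split i with inl j => s1 j | inr j => s2 j end); split.
  by move=> i; case: (split i).
move=> q; rewrite E1 E2 big_split_ord; congr (_ + _); apply: eq_bigr => i _.
  by rewrite -[lshift n2 i]/(unsplit (inl i)) unsplitK.
by rewrite -[rshift n1 i]/(unsplit (inr i)) unsplitK.
Qed.

Lemma gen_scale S f a : gen_ideal S f -> gen_ideal S (fun q => a * f q).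
Proof.
move=> [n [c [l [r [s [H E]]]]]]; exists n, (fun i => a * c i), l, r, s; split => // q.
by rewrite E mulr_sumr; apply: eq_bigr => i _; rewrite mulrA.
Qed.

Lemma gen_sum_seq S (T : Type) (xs : seq T) (F : T -> elt K Q) :
  (forall t, gen_ideal S (F t)) -> gen_ideal S (fun q => \sum_(t <- xs) F t q).
Proof.
move=> H; elim: xs => [|t xs IH].
  by apply: gen_ext (gen0 S) => q; rewrite big_nil.
by apply: gen_ext (gen_add (H t) IH) => q; rewrite big_cons.
Qed.

Lemma gen_sumT S (T : finType) (F : T -> elt K Q) :
  (forall t, gen_ideal S (F t)) -> gen_ideal S (fun q => \sum_(t : T) F t q).
Proof. by move=> H; apply: gen_sum_seq. Qed.

Lemma gen_mono S S' f : (forall x, S x -> S' x) -> gen_ideal S f -> gen_ideal S' f.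
Proof.
move=> HS [n [c [l [r [s [H E]]]]]]; exists n, c, l, r, s; split => // i.
by case: (H i) => ? ? /HS.
Qed.

Lemma gen_RL S s l r :
  gen_ideal S s -> valid l -> valid r -> gen_ideal S (RL l s r).
Proof.
move=> [n [c [ls [rs [ss [H E]]]]]] Vl Vr.
pose cl i := pend l.1 l.2 == (ls i).1.
pose cr i := pend (rs i).1 (rs i).2 == r.1.
exists n, (fun i => if cl i && cr i then c i else 0),
  (fun i => if cl i then (l.1, l.2 ++ (ls i).2) else ls i),
  (fun i => if cr i then ((rs i).1, (rs i).2 ++ r.2) else rs i), ss; split.
  move=> i; case: (H i) => V1 V2 V3; split => //.
    case E1: (cl i) => //; rewrite /valid /= compat_cat.
    by move/eqP: E1 => ->; move: Vl V1; rewrite /valid => -> ->.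
  case E1: (cr i) => //; rewrite /valid /= compat_cat.
  by move/eqP: E1 => ->; move: Vr V2; rewrite /valid => -> ->.
move=> q; rewrite (@RL_cong _ _ (fun q => \sum_(i < n) c i * RL (ls i) (ss i) (rs i) q)) //.
rewrite RL_lin; apply: eq_bigr => i _; rewrite RL_comp -/(cl i) -/(cr i).
by case: (cl i); case: (cr i); rewrite /= ?mulr0 ?mul0r.
Qed.

Lemma gen_sub S S' f :
  (forall s, S s -> gen_ideal S' s) -> gen_ideal S f -> gen_ideal S' f.
Proof.
move=> HS [n [c [l [r [s [H E]]]]]].
have G : gen_ideal S' (fun q => \sum_(i : 'I_n) c i * RL (l i) (s i) (r i) q).
  have X := (@gen_sumT S' _ (fun i => fun q => c i * RL (l i) (s i) (r i) q)); apply: X => i.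
  apply: gen_scale; case: (H i) => V1 V2 /HS G; exact: gen_RL.
by apply: gen_ext G => q; rewrite E.
Qed.

Lemma gen_self S x : S x -> gen_ideal S x.
Proof.
move=> Sx.
have G : gen_ideal S (fun q => \sum_(v : qV Q) \sum_(v' : qV Q) RL (v, [::]) x (v', [::]) q).
  apply: gen_sumT => v; apply: gen_sumT => v'.
  exists 1%N, (fun _ => 1), (fun _ => (v, [::])), (fun _ => (v', [::])), (fun _ => x).
  by split => // q; rewrite big_ord1 mul1r.
apply: gen_ext G => q.
rewrite (bigD1 q.1) //= [X in _ + X]big1 ?addr0; last first.
  move=> v /negbTE ne; apply: big1 => v' _; by rewrite RL_triv eq_sym ne mul0r.
rewrite (bigD1 (pend q.1 q.2)) //= [X in _ + X]big1 ?addr0; last first.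
  move=> v' /negbTE ne; by rewrite RL_triv eqxx eq_sym ne mul0r.
by rewrite RL_triv !eqxx mul1r.
Qed.

Lemma pmul_vtxL (v : qV Q) x w : pmul (vtx K v) x w = (w.1 == v)%:R * x w.
Proof.
case: w => wv ws /=; case: (eqVneq wv v) => [->|ne].
  by have := pmulL_in (v, [::]) x ws; rewrite /= /vtx => ->; rewrite mul1r.
rewrite mul0r pmulL_out // => u [E]; by rewrite E eqxx in ne.
Qed.

Lemma pmul_vtxR (v : qV Q) x w : pmul x (vtx K v) w = (pend w.1 w.2 == v)%:R * x w.
Proof. by case: w => wv ws; have := pmulR_in x (v, [::]) wv ws; rewrite /= cats0. Qed.
End Gen.

Section Str.
Variable Q : quiver.
Variable A : nat.
Hypothesis A1 : (0 < A)%N.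

Local Notation Qs := (stretch Q A).
Implicit Types (a : qE Q).

Lemma inl_eq (T1 T2 : eqType) (x y : T1) : (@inl T1 T2 x == inl y) = (x == y).
Proof. by apply/eqP/eqP => [[]|->]. Qed.

Lemma smid0 (a : qE Q) : smid A a 0 = inl (qsrc a).
Proof. by []. Qed.

Lemma smidA (a : qE Q) : smid A a A = inl (qtgt a).
Proof.
rewrite /smid; case: eqP => [E|_]; first by move: A1; rewrite E.
by rewrite insubF // ltnn.
Qed.

Lemma smid_inr (a b : qE Q) j i : smid A b j = inr (a, i) -> b = a /\ j = i.+1.
Proof.
rewrite /smid; case: eqP => // /eqP j0.
case: insubP => [i' _ Ei' [E1 E2]|//].
by split => //; rewrite -E2 Ei' prednK // lt0n.
Qed.

Lemma smid_mid (a : qE Q) k : (0 < k)%N -> (k < A)%N -> exists i, smid A a k = inr (a, i).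
Proof.
move=> k0 kA; rewrite /smid; case: eqP => [E|_]; first by rewrite E in k0.
rewrite insubT; first by rewrite -ltnS prednK // prednK.
by move=> H; eexists.
Qed.

Definition blk (a : qE Q) : seq (qE Qs) := [seq ((a, j) : qE Qs) | j <- enum 'I_A].
Definition thl (s : seq (qE Q)) : seq (qE Qs) := flatten [seq blk a | a <- s].

Lemma size_blk a : size (blk a) = A.
Proof. by rewrite size_map size_enum_ord. Qed.

Lemma drop_blk a k (Hk : (k < A)%N) :
  drop k (blk a) = ((a, Ordinal Hk) : qE Qs) :: drop k.+1 (blk a).
Proof.
rewrite (drop_nth ((a, Ordinal Hk) : qE Qs)) ?size_blk //; congr cons.
rewrite /blk (nth_map (Ordinal Hk)) ?size_enum_ord //; congr pair.
by apply: val_inj; rewrite /= nth_enum_ord.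
Qed.

Lemma pend_dblk a k : (k <= A)%N -> @pend Qs (smid A a k) (drop k (blk a)) = inl (qtgt a).
Proof.
move Ed: (A - k)%N => d; elim: d k Ed => [|d IH] k Ed kA.
  have -> : k = A by apply/eqP; rewrite eqn_leq kA -subn_eq0 Ed.
  by rewrite drop_oversize ?size_blk //= smidA.
have kA' : (k < A)%N by rewrite -subn_gt0 Ed.
rewrite (drop_blk a kA') pend_cons /=; apply: IH => //; lia.
Qed.

Lemma compat_dblk a k : (k <= A)%N -> @compat Qs (smid A a k) (drop k (blk a)).
Proof.
move Ed: (A - k)%N => d; elim: d k Ed => [|d IH] k Ed kA.
  have -> : k = A by apply/eqP; rewrite eqn_leq kA -subn_eq0 Ed.
  by rewrite drop_oversize ?size_blk.
have kA' : (k < A)%N by rewrite -subn_gt0 Ed.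
rewrite (drop_blk a kA') /= eqxx /=; apply: IH => //; lia.
Qed.

Lemma pend_tblk a k (v : qV Qs) : (0 < k)%N -> (k <= A)%N -> pend v (take k (blk a)) = smid A a k.
Proof.
elim: k => // k IH _ kA.
have kA' : (k < A)%N by [].
rewrite (take_nth ((a, Ordinal kA') : qE Qs)) ?size_blk //.
rewrite /pend map_rcons last_rcons /=.
rewrite /blk (nth_map (Ordinal kA')) ?size_enum_ord //= nth_enum_ord //.
Qed.

Lemma pend_blk a (v : qV Qs) : pend v (blk a) = inl (qtgt a).
Proof.
have := pend_tblk a v A1 (leqnn A); rewrite take_oversize ?size_blk // => ->.
exact: smidA.
Qed.

Lemma compat_blk a t (v : qV Qs) :
  compat v (blk a ++ t) = (v == inl (qsrc a)) && @compat Qs (inl (qtgt a)) t.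
Proof.
rewrite -[blk a](drop0) (drop_blk a A1) /= eq_sym; congr andb.
rewrite compat_cat compat_dblk //= pend_dblk //.
Qed.

Lemma thl_cons a s : thl (a :: s) = blk a ++ thl s.
Proof. by []. Qed.

Lemma thl_cat s1 s2 : thl (s1 ++ s2) = thl s1 ++ thl s2.
Proof. by rewrite /thl map_cat flatten_cat. Qed.

Lemma size_thl s : size (thl s) = (size s * A)%N.
Proof. by elim: s => //= a s IH; rewrite thl_cons size_cat size_blk IH mulSn. Qed.

Lemma compat_thl (v : qV Q) s : @compat Qs (inl v) (thl s) = compat v s.
Proof.
elim: s v => //= a s IH v; rewrite thl_cons compat_blk IH inl_eq eq_sym //.
Qed.

Lemma pend_thl (v : qV Q) s : @pend Qs (inl v) (thl s) = inl (pend v s).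
Proof.
elim: s v => //= a s IH v; rewrite thl_cons pend_cat pend_blk IH //.
Qed.

Lemma filter_blk a : [seq y <- blk a | val y.2 == 0%N] = [:: ((a, Ordinal A1) : qE Qs)].
Proof.
rewrite /blk filter_map /=.
have -> : [seq j <- enum 'I_A | preim (fun j => ((a, j) : qE Qs)) (fun y => val y.2 == 0%N) j]
  = [seq j <- enum 'I_A | pred1 (Ordinal A1) j].
  by apply: eq_filter => j /=; apply/eqP/eqP => [E|->//]; apply: val_inj.
by rewrite filter_pred1_uniq ?enum_uniq ?mem_enum.
Qed.

Lemma ctr_thl s : [seq y.1 | y <- thl s & val y.2 == 0%N] = s.
Proof.
elim: s => //= a s IH; rewrite thl_cons filter_cat map_cat filter_blk /= IH //.
Qed.

Lemma thl_inj s1 s2 : thl s1 = thl s2 -> s1 = s2.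
Proof. by move=> E; rewrite -(ctr_thl s1) E ctr_thl. Qed.

Lemma theta_pathE (p : qpath Q) : theta_path A p = (inl p.1, thl p.2).
Proof. by []. Qed.

Lemma theta_inj (p1 p2 : qpath Q) : theta_path A p1 = theta_path A p2 -> p1 = p2.
Proof.
case: p1 p2 => v1 s1 [v2 s2]; rewrite !theta_pathE /= => [[E1 /thl_inj E2]].
by rewrite E1 E2.
Qed.

Lemma valid_theta (p : qpath Q) : valid (theta_path A p) = valid p.
Proof. by case: p => v s; rewrite /valid /= compat_thl. Qed.

Lemma pend_theta (p : qpath Q) :
  @pend Qs (theta_path A p).1 (theta_path A p).2 = inl (pend p.1 p.2).
Proof. by case: p => v s; rewrite /= pend_thl. Qed.

Lemma take_align s k (v : qV Q) u :
  @pend Qs (inl v) (take k (thl s)) = inl u ->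
  exists t, take k (thl s) = thl (take t s) /\ drop k (thl s) = thl (drop t s).
Proof.
elim: s k v => [|a s IH] k v.
  by move=> _; exists 0%N; split; case: k.
case: (posnP k) => [->|k0]; first by move=> _; exists 0%N; rewrite take0 drop0.
rewrite thl_cons take_cat size_blk; case: ltnP => [kA|Ak].
  case: (smid_mid a k0 kA) => i Ei; rewrite (pend_tblk _ _ k0 (ltnW kA)) Ei; discriminate.
rewrite pend_cat pend_blk => /IH [t [E1 E2]]; exists t.+1.
by rewrite /= thl_cons E1 drop_cat size_blk ltnNge Ak /= E2.
Qed.

Variable K : fieldType.

Lemma thS_img (F : elt K Q) (p : qpath Q) : thetaS F (theta_path A p) = F p.
Proof.
case: p => v s; rewrite /thetaS /= ctr_thl; by rewrite eqxx.
Qed.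

Lemma thS_nimg (F : elt K Q) (q : qpath Qs) :
  (forall p, q <> theta_path A p) -> thetaS F q = 0.
Proof.
case: q => [[v|w] s] H; rewrite /thetaS //=; case: eqP => // E.
by exfalso; apply: (H (v, [seq x.1 | x <- s & val x.2 == 0%N])).
Qed.

Lemma thS_cases (q : qpath Qs) :
  (exists p, q = theta_path A p) \/ (forall p, q <> theta_path A p).
Proof.
case: (classic (exists p, q = theta_path A p)) => [H|N]; [by left|right].
by move=> p E; apply: N; exists p.
Qed.

End Str.

Section Th.
Variable K : fieldType.
Variable Q : quiver.
Variable A : nat.
Hypothesis A1 : (0 < A)%N.
Local Notation Qs := (stretch Q A).
Local Notation th := (theta_path A).

Lemma theta_pair (v : qV Q) s : ((inl v : qV Qs), thl A s) = th (v, s).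
Proof. by []. Qed.

Lemma thS_RL (l r : qpath Q) (s : elt K Q) q :
  thetaS (RL l s r) q = RL (th l) (thetaS s) (th r) q.
Proof.
case: (thS_cases q) => [[p ->]|N].
  rewrite (thS_img A1); case: (RL_cases l r p) => [[u ->]|N2].
    rewrite RL_in.
    have -> : th (l.1, l.2 ++ u ++ r.2) = ((th l).1, (th l).2 ++ thl A u ++ (th r).2).
      by rewrite !theta_pathE /= !thl_cat.
    rewrite RL_in (pend_theta A1) /= (pend_thl A1 (pend l.1 l.2) u) inl_eq theta_pair (thS_img A1) //.
  rewrite RL_out //; case: (RL_cases (th l) (th r) (th p)) => [[u E]|N3]; last first.
    by rewrite RL_out.
  rewrite E RL_in (pend_theta A1); case: (thS_cases (inl (pend l.1 l.2) : qV Qs, u)) => [[w Ew]|N4].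
    exfalso; apply: (N2 w.2); apply: (@theta_inj _ _ A1); rewrite E.
    move: Ew; rewrite theta_pathE => [[E1 ->]].
    by rewrite !theta_pathE /= !thl_cat.
  by rewrite (thS_nimg _ N4) mulr0.
rewrite (thS_nimg _ N); case: (RL_cases (th l) (th r) q) => [[u E]|N3]; last first.
  by rewrite RL_out.
rewrite E RL_in (pend_theta A1); case: (thS_cases (inl (pend l.1 l.2) : qV Qs, u)) => [[w Ew]|N4].
  exfalso; apply: (N (l.1, l.2 ++ w.2 ++ r.2)); rewrite E.
  move: Ew; rewrite theta_pathE => [[E1 ->]].
  by rewrite !theta_pathE /= !thl_cat.
by rewrite (thS_nimg _ N4) mulr0.
Qed.

Variable v0 : qV Q.
Definition ctr (q : qpath Qs) : qpath Q :=
  (match q.1 with inl v => v | inr _ => v0 end, [seq y.1 | y <- q.2 & val y.2 == 0%N]).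

Lemma ctr_theta p : ctr (th p) = p.
Proof. by case: p => v s; rewrite /ctr /= ctr_thl. Qed.

Definition isth (q : qpath Qs) := th (ctr q) == q.

Lemma isth_theta p : isth (th p).
Proof. by rewrite /isth ctr_theta. Qed.

Lemma RL_untheta (l' r' : qpath Qs) (x : elt K Q) p :
  RL l' (thetaS x) r' (th p) =
  if isth l' && isth r' then RL (ctr l') x (ctr r') p else 0.
Proof.
case: ifP => [/andP[/eqP E1 /eqP E2]|Hf].
  by rewrite -{1}E1 -{1}E2 -thS_RL (thS_img A1).
case: (RL_cases l' r' (th p)) => [[u E]|N]; last by rewrite RL_out.
rewrite E RL_in; case: (thS_cases (pend l'.1 l'.2, u)) => [[w Ew]|N3]; last first.
  by rewrite (thS_nimg _ N3) mulr0.
case: eqP => [Er|_]; last by rewrite mul0r.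
exfalso; move: E; rewrite theta_pathE => [[El1 El2]].
move: Ew; rewrite theta_pathE => [[Ew1 Ew2]].
have T1 : take (size l'.2) (thl A p.2) = l'.2 by rewrite El2 take_size_cat.
have P1 : pend (inl p.1 : qV Qs) (take (size l'.2) (thl A p.2)) = inl w.1 by rewrite T1 El1.
case: (take_align A1 P1) => t [Et _].
have Hl : l' = th (p.1, take t p.2).
  by rewrite theta_pathE /= -Et T1 El1; case: (l').
have T2 : take (size (l'.2 ++ u)) (thl A p.2) = l'.2 ++ u by rewrite El2 catA take_size_cat.
have P2 : pend (inl p.1 : qV Qs) (take (size (l'.2 ++ u)) (thl A p.2)) = inl (pend w.1 w.2).
  by rewrite T2 pend_cat El1 Ew1 Ew2 pend_thl.
case: (take_align A1 P2) => t' [_ Et'].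
have Hr : r' = th (pend w.1 w.2, drop t' p.2).
  move: Et'; rewrite El2 catA drop_size_cat // => Et'.
  case: r' Er El2 Et' {Hf} => a b /= <- _ ->.
  by rewrite Ew1 Ew2 (pend_thl A1 w.1 w.2) theta_pathE.
by rewrite Hl Hr !isth_theta in Hf.
Qed.

Lemma gen_untheta (S : elt K Q -> Prop) (S' : elt K Qs -> Prop) (F : elt K Qs) :
  (forall y, S' y -> S (fun p => y (th p)) /\ exists x, forall q, y q = thetaS x q) ->
  gen_ideal S' F -> gen_ideal S (fun p => F (th p)).
Proof.
move=> HS [n [c [l [r [s [H E]]]]]].
exists n, (fun i => if isth (l i) && isth (r i) then c i else 0),
  (fun i => if isth (l i) then ctr (l i) else (v0, [::])),
  (fun i => if isth (r i) then ctr (r i) else (v0, [::])),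
  (fun i => fun p => s i (th p)); split.
  move=> i; case: (H i) => V1 V2 /HS [S1 _]; split => //.
    case E1: (isth (l i)) => //; move: V1; rewrite -{1}(eqP E1).
    by rewrite (valid_theta A1).
  case E1: (isth (r i)) => //; move: V2; rewrite -{1}(eqP E1).
  by rewrite (valid_theta A1).
move=> p; rewrite E; apply: eq_bigr => i _.
case: (H i) => _ _ /HS [_ [x Ex]].
change (c i * RL (l i) (s i) (r i) (th p) = (if isth (l i) && isth (r i) then c i else 0) * RL (if isth (l i) then ctr (l i) else (v0, [::])) (fun p0 => s i (th p0)) (if isth (r i) then ctr (r i) else (v0, [::])) p).
rewrite (RL_cong (l i) (r i) (th p) Ex) RL_untheta.
case: (isth (l i)); case: (isth (r i)); rewrite /= ?mulr0 ?mul0r //.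
congr (_ * _); apply: RL_cong => q.
by rewrite Ex (thS_img A1).
Qed.
End Th.

Section Th2.
Variable K : fieldType.
Variable Q : quiver.
Variable A : nat.
Hypothesis A1 : (0 < A)%N.
Local Notation Qs := (stretch Q A).
Local Notation th := (theta_path A).

Lemma is_elt_thS (x : elt K Q) : is_elt x -> is_elt (@thetaS K Q A x).
Proof.
move=> [H1 [r H2]]; split.
  move=> q Hq; case: (thS_cases q) => [[p Ep]|N]; last by rewrite thS_nimg.
  by rewrite Ep (thS_img A1) H1 // -(valid_theta A1) -Ep.
exists (map th r) => q; case: (thS_cases q) => [[p ->]|N]; last by rewrite thS_nimg ?eqxx.
by rewrite (thS_img A1) => /H2 Hp; apply: map_f.
Qed.

Lemma uniform_thS (x : elt K Q) : uniform x -> uniform (@thetaS K Q A x).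
Proof.
move=> [v [v' [H1 H2]]]; exists (inl v), (inl v'); split => q.
  rewrite pmul_vtxL; case: (thS_cases q) => [[p ->]|N]; last by rewrite thS_nimg // mulr0.
  by rewrite (thS_img A1) /= inl_eq -pmul_vtxL -H1.
rewrite pmul_vtxR; case: (thS_cases q) => [[p ->]|N]; last by rewrite thS_nimg // mulr0.
by rewrite (thS_img A1) (pend_theta A1) inl_eq -pmul_vtxR -H2.
Qed.

Lemma thS_pth (p : qpath Q) q : @thetaS K Q A (pth K p) q = pth K (th p) q.
Proof.
rewrite /pth; case: (thS_cases q) => [[p' ->]|N].
  by rewrite (thS_img A1) (inj_eq (theta_inj A1)).
rewrite thS_nimg //; case: eqP => // E; by case: (N p).
Qed.

Lemma lhom_thS d (x : elt K Q) : lhom_of d x -> lhom_of (d * A) (@thetaS K Q A x).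
Proof.
move=> H q; case: (thS_cases q) => [[p ->]|N]; last by rewrite thS_nimg ?eqxx.
rewrite (thS_img A1) => /H; rewrite /plen /= size_thl => -> //.
Qed.

Lemma gen_theta (S : elt K Q -> Prop) f :
  gen_ideal S f -> gen_ideal (fun y => exists x, S x /\ y = @thetaS K Q A x) (@thetaS K Q A f).
Proof.
move=> [n [c [l [r [s [H E]]]]]].
exists n, c, (fun i => th (l i)), (fun i => th (r i)), (fun i => thetaS (s i)); split.
  move=> i; case: (H i) => V1 V2 S1; split; rewrite ?(valid_theta A1) //.
  by exists (s i).
move=> q; case: (thS_cases q) => [[p ->]|N].
  rewrite (thS_img A1) E; apply: eq_bigr => i _.
  rewrite -[pmul (pmul _ _) _ _]/(RL _ _ _ _) -[pmul (pmul _ _) _ (th p)]/(RL _ _ _ _).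
  by rewrite -(thS_RL A1) (thS_img A1).
rewrite thS_nimg // big1 // => i _.
rewrite -[pmul (pmul _ _) _ _]/(RL _ _ _ _).
by rewrite -(thS_RL A1) thS_nimg // mulr0.
Qed.
End Th2.

Fixpoint allseqs (T : finType) (n : nat) : seq (seq T) :=
  match n with 0 => [:: [::]] | n.+1 => [seq x :: t | x <- enum T, t <- allseqs T n] end.

Lemma mem_allseqs (T : finType) (s : seq T) : s \in allseqs T (size s).
Proof. by elim: s => //= x s IH; apply: allpairs_f => //; rewrite mem_enum. Qed.

Definition shortseqs (T : finType) L := flatten [seq allseqs T k | k <- iota 0 L].

Lemma mem_short (T : finType) L (s : seq T) : (size s < L)%N -> s \in shortseqs T L.
Proof.
move=> H; apply/flatten_mapP; exists (size s); last exact: mem_allseqs.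
by rewrite mem_iota.
Qed.

Section Fin.
Variable K : fieldType.
Variable Q : quiver.

Lemma elt_decomp (h : elt K Q) (r : seq (qpath Q)) :
  (forall w, h w != 0 -> w \in r) ->
  forall w, h w = \sum_(q <- undup r) h q * pth K q w.
Proof.
move=> H w; case: (boolP (w \in r)) => [wr|wr].
  rewrite (big_rem w) ?mem_undup //= big1_seq; first by rewrite /pth eqxx mulr1 addr0.
  move=> q /andP[_].
  rewrite mem_rem_uniq ?undup_uniq // => /andP[/= nq _].
  by rewrite /pth; case: eqP => [E|]; [rewrite E eqxx in nq | rewrite mulr0].
have -> : h w = 0 by apply/eqP; apply: contraNT wr => /H.
rewrite big1_seq // => q /andP[_ qr]; rewrite /pth; case: eqP => [E|]; last by rewrite mulr0.
by rewrite -E mem_undup (negbTE wr) in qr.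
Qed.

Lemma findim_of (S : elt K Q -> Prop) L :
  (forall q, valid q -> (L <= size q.2)%N -> gen_ideal S (pth K q)) ->
  findim_quot (gen_ideal S).
Proof.
move=> HL.
pose P := [seq q <- [seq (v, s) | v <- enum (qV Q), s <- shortseqs (qE Q) L] | valid q].
have memP q : valid q -> (size q.2 < L)%N -> q \in P.
  move=> V Hs; rewrite mem_filter V /=; case: q V Hs => v s V Hs.
  by apply: allpairs_f; rewrite ?mem_enum ?mem_short.
exists (size P), (fun (i : 'I_(size P)) (q : qpath Q) => ((index q P == i)%:R : K)); split.
  move=> i; split.
    move=> q Vq; case: eqP => // E; exfalso.
    have : q \in P by rewrite -index_mem E ltn_ord.
    by rewrite mem_filter (negbTE Vq).
  exists P => q; case: (eqVneq (index q P) i) => [E _|_]; last by rewrite eqxx.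
  by rewrite -index_mem E ltn_ord.
move=> f [H1 [r H2]].
case: (pickP (fun _ : qV Q => true)) => [v0 _|none]; last first.
  exists (fun _ => 0); apply: gen_ext (gen0 S) => q.
  by move: (none q.1).
exists (fun i => f (nth (v0, [::]) P i)).
pose h := fun w => if w \in P then 0 else f w.
have Eh w : f w - \sum_(i < size P) f (nth (v0, [::]) P i) * (index w P == i)%:R = h w.
  rewrite /h; case: (boolP (w \in P)) => wP.
    have Hi : (index w P < size P)%N by rewrite index_mem.
    rewrite (bigD1 (Ordinal Hi)) //= eqxx mulr1 nth_index // big1 ?addr0 ?subrr //.
    move=> i /= ne; case: eqP => [E|]; last by rewrite mulr0.
    by move: ne; rewrite -(inj_eq val_inj) /= E eqxx.
  rewrite big1 ?subr0 // => i _; case: eqP => [E|]; last by rewrite mulr0.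
  by move: (ltn_ord i); rewrite -E index_mem (negbTE wP).
apply: gen_ext (fun w => esym (Eh w)) _.
have Hh w : h w != 0 -> w \in r.
  by rewrite /h; case: (w \in P) => //; rewrite ?eqxx // => /H2.
apply: gen_ext (fun w => esym (elt_decomp Hh w)) _.
apply: gen_sum_seq => q.
case: (eqVneq (h q) 0) => [->|nz].
  by apply: gen_ext (gen0 S) => w; rewrite mul0r.
apply: gen_scale; move: nz; rewrite /h; case: (boolP (q \in P)) => //; rewrite ?eqxx // => qP fq.
have Vq : valid q by apply: contraNT fq => /H1 ->.
apply: HL => //; rewrite leqNgt; apply: contra qP; exact: memP.
Qed.
End Fin.

Section Dec.
Variable Q : quiver.
Variable A : nat.
Hypothesis A1 : (0 < A)%N.
Local Notation Qs := (stretch Q A).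
Implicit Types (a : qE Q).

Lemma forced a k (s : seq (qE Qs)) : (0 < k)%N -> (k <= A)%N ->
  compat (smid A a k : qV Qs) s -> (A - k <= size s)%N ->
  take (A - k) s = drop k (blk A a) /\ compat (inl (qtgt a) : qV Qs) (drop (A - k) s).
Proof.
move Ed: (A - k)%N => d; elim: d k s Ed => [|d IH] k s Ed k0 kA.
  have Ek : k = A by apply/eqP; rewrite eqn_leq kA -subn_eq0 Ed.
  rewrite Ek drop_oversize ?size_blk // take0 drop0 (smidA A1) => C _; by [].
have kA' : (k < A)%N by rewrite -subn_gt0 Ed.
case: s => [|x s] //= /andP[/eqP Ex C] Hs.
have [i Ei] := smid_mid A1 a k0 kA'.
have Ex' : smid A x.1 x.2 = inr (a, i) by rewrite -Ei -Ex.
have [Ea Ek] := smid_inr Ex'.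
have Ek' : val x.2 = k by move: Ek; have [_ ->] := smid_inr Ei.
have -> : x = ((a, Ordinal kA') : qE Qs).
  by case: x Ea Ek' {Ex Ex' Ek C} => x1 x2 /= -> E; congr pair; apply: val_inj.
rewrite (drop_blk a kA').
have C' : compat (smid A a k.+1 : qV Qs) s by move: C; rewrite -Ek' -Ea; case: (x).
have Ed' : (A - k.+1)%N = d by rewrite subnS Ed.
have [IH1 IH2] := IH k.+1 s Ed' (ltn0Sn _) kA' C' Hs.
by split => //; rewrite IH1.
Qed.

Lemma takeA (T : Type) (y : T) t : take A (y :: t) = y :: take A.-1 t.
Proof. by rewrite -{1}(prednK A1). Qed.
Lemma dropA (T : Type) (y : T) t : drop A (y :: t) = drop A.-1 t.
Proof. by rewrite -{1}(prednK A1). Qed.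

Lemma blocks N (u : qV Q) (s : seq (qE Qs)) :
  compat (inl u : qV Qs) s -> (N * A <= size s)%N ->
  exists p2, [/\ size p2 = N, take (N * A) s = thl A p2 & compat u p2].
Proof.
elim: N u s => [|N IH] u s C Hs.
  by exists [::]; rewrite mul0n take0.
case: s C Hs => [|x s] /=.
  by rewrite mulSn; case: A A1.
move=> /andP[/eqP Ex C] Hs.
have x0 : val x.2 = 0%N.
  case: (posnP (val x.2)) => // x0; exfalso.
  by have [i Ei] := smid_mid A1 x.1 x0 (ltn_ord x.2); move: Ex; rewrite /= Ei.
move Ea0: x.1 => a.
have Ea : qsrc a = u by move: Ex; rewrite /= x0 smid0 Ea0 => [[]].
have Ex' : x = ((a, Ordinal A1) : qE Qs).
  by case: x Ea0 x0 {Ex C} => x1 x2 /= -> E; congr pair; apply: val_inj.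
rewrite Ex' in C; rewrite Ex'.
have Hs1 : (A - 1 <= size s)%N.
  move: Hs; rewrite mulSn /=; move: (size s) (N * A)%N => n m; lia.
have [F1 F2] := forced (ltn0Sn 0) A1 C Hs1.
have Hs2 : (N * A <= size (drop (A - 1) s))%N.
  move: Hs; rewrite size_drop mulSn /=; move: (size s) (N * A)%N => n m; lia.
have [p2 [P1 P2 P3]] := IH _ _ F2 Hs2.
exists (a :: p2); split; first by rewrite /= P1.
  rewrite mulSn takeD takeA dropA -subn1 F1 P2 thl_cons; congr (_ ++ _).
  by apply: esym; rewrite /= -{1}[blk A a]drop0 (drop_blk a A1).
by rewrite /= Ea eqxx.
Qed.

Lemma smid_succ a (j : 'I_A.-1) : smid A a j.+1 = inr (a, j).
Proof.
rewrite /smid /=; case: insubP => [j' _ E|]; first by congr (inr (a, _)); apply: val_inj.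
by rewrite /= ltn_ord.
Qed.

Lemma reach (v : qV Qs) s : compat v s -> (A <= size s)%N ->
  exists i0 u, [/\ (i0 < A)%N, pend v (take i0 s) = inl u & compat (inl u : qV Qs) (drop i0 s)].
Proof.
case: v => [u|[a j]] C Hs.
  by exists 0%N, u; rewrite take0 drop0.
have k0 : (0 < j.+1)%N by [].
have kA : (j.+1 <= A)%N by apply: ltnW; rewrite -{2}(prednK A1) ltnS.
rewrite -(smid_succ a j) in C.
have Hs' : (A - j.+1 <= size s)%N by apply: leq_trans Hs; apply: leq_subr.
have [F1 F2] := forced k0 kA C Hs'.
exists (A - j.+1)%N, (qtgt a); split => //.
  by rewrite subnSK // leq_subr.
by rewrite F1 -(smid_succ a j) pend_dblk.
Qed.

Lemma decomp (v : qV Qs) s N : compat v s -> (N.+1 * A <= size s)%N ->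
  exists pre p2 post u, [/\ s = pre ++ thl A p2 ++ post, pend v pre = inl u,
     compat u p2 & size p2 = N].
Proof.
move=> C Hs.
have HA : (A <= size s)%N by apply: leq_trans Hs; rewrite mulSn leq_addr.
have [i0 [u [i0A P1 C1]]] := reach C HA.
have Hs1 : (N * A <= size (drop i0 s))%N.
  move: Hs i0A; rewrite size_drop mulSn; move: (size s) (N * A)%N => n m; lia.
have [p2 [Q1 Q2 Q3]] := blocks C1 Hs1.
exists (take i0 s), p2, (drop (N * A) (drop i0 s)), u; split => //.
by rewrite -Q2 cat_take_drop cat_take_drop.
Qed.
End Dec.

Section Main.
Variable K : fieldType.
Variable Q : quiver.
Variable A : nat.
Hypothesis A1 : (0 < A)%N.
Local Notation Qs := (stretch Q A).
Local Notation th := (theta_path A).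

Lemma long_path (S : elt K Q -> Prop) N (q : qpath Qs) :
  (forall p, valid p -> size p.2 = N -> gen_ideal S (pth K p)) -> valid q ->
  (N.+1 * A <= size q.2)%N ->
  gen_ideal (fun y => exists x, S x /\ y = @thetaS K Q A x) (pth K q).
Proof.
case: q => v s HN Vq Hs.
have [pre [p2 [post [u [Es Pu Cu Sz]]]]] := decomp A1 Vq Hs.
rewrite /= in Es Pu.
have G1 : gen_ideal S (pth K (u, p2)) by apply: HN.
have G2 := gen_theta A1 G1.
have G3 : gen_ideal (fun y => exists x, S x /\ y = @thetaS K Q A x) (pth K (th (u, p2))).
  by apply: gen_ext G2 => w; rewrite (thS_pth K A1).
move: Vq; rewrite /valid /= Es compat_cat compat_cat Pu (compat_thl A1) (pend_thl A1).
move=> /andP[V1 /andP[_ V2]].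
have G4 := gen_RL G3 (V1 : valid (v, pre)) (V2 : valid ((inl (pend u p2) : qV Qs), post)).
apply: gen_ext G4 => w.
case: (RL_cases (v, pre) ((inl (pend u p2) : qV Qs), post) w) => [[u' ->]|N2].
  rewrite RL_in /= Pu /pth theta_pathE /=.
  case: (eqVneq u' (thl A p2)) => [->|ne]; first by rewrite (pend_thl A1) !eqxx mul1r.
  rewrite xpair_eqE eqxx (negbTE ne) /= mulr0; case: eqP => // [[/catsI /catIs E]].
  by rewrite E eqxx in ne.
rewrite RL_out // /pth; case: eqP => // E; exfalso.
by apply: (N2 (thl A p2)); rewrite E.
Qed.
End Main.

Lemma transfer (K : fieldType) (Q : quiver) (A : nat) (A1 : (0 < A)%N) (m : nat)
  (g : 'I_m -> elt K Q) (S : elt K Q -> Prop) (S' : elt K (stretch Q A) -> Prop) :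
  generates S (gen_ideal (range_of g)) ->
  (forall x, S x -> gen_ideal S' (thetaS x)) ->
  (forall y, S' y -> exists x, S x /\ forall q, y q = thetaS x q) ->
  generates S' (gen_ideal (range_of (fun i => @thetaS K Q A (g i)))).
Proof.
move=> HG H1 H2 f; split.
  apply: gen_sub => s [i ->].
  have : gen_ideal S (g i) by apply/HG; apply: gen_self; exists i.
  move/(gen_theta A1); apply: gen_sub => y [x [Sx ->]]; exact: H1.
apply: gen_sub => y /H2 [x [Sx Ey]].
have : gen_ideal (range_of g) x by apply/HG; exact: gen_self.
move/(gen_theta A1)/(gen_mono (S' := range_of (fun i => @thetaS K Q A (g i)))).
move=> G; apply: gen_ext (G _) => [q|]; first by rewrite Ey.
by move=> z [x' [[i ->] ->]]; exists i.
Qed.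

Theorem proposition1p7 (K : fieldType) (Q : quiver) (m : nat)
  (g : 'I_m -> elt K Q) (A : nat) :
  (1 <= A)%N ->
  (forall i, is_elt (g i)) ->
  (forall i, uniform (g i)) ->
  minimal_gen g ->
  admissible (gen_ideal (range_of g)) ->
  findim_quot (gen_ideal (range_of g)) ->
  let gt : 'I_m -> elt K (stretch Q A) := fun i => @thetaS K Q A (g i) in
  let I := gen_ideal (range_of g) in
  let It := gen_ideal (range_of gt) in
  (* (1) *) findim_quot It /\
  (* (2) *) (#|qV (stretch Q A)| = (#|qV Q| + #|qE Q| * (A - 1))%N
             /\ #|qE (stretch Q A)| = (#|qE Q| * A)%N) /\
  (* (3) *) [/\ forall i, is_elt (gt i), forall i, uniform (gt i),
                    generates (range_of gt) It & minimal_gen gt] /\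
  (* (4) *) (lhom_generated I -> lhom_generated It) /\
  (* (5) *) (forall d, lhom_generated_of d I -> lhom_generated_of (d * A) It) /\
  (* (6) *) (monomial_ideal I -> monomial_ideal It).
Proof.
move=> A1 Hel Hun Hmin Hadm Hfin gt I It.
case: Hadm => [[N [N2 HN]] HJ2].
split.
  apply: (@findim_of _ _ _ (N.+1 * A)) => q Vq Hq.
  have HP : forall p, valid p -> size p.2 = N -> gen_ideal (range_of g) (pth K p).
    move=> p Vp Sp; apply: HN.
    split.
      by move=> q' Vq'; rewrite /pth; case: eqP => // E; rewrite E Vp in Vq'.
    by exists [:: p] => q'; rewrite /pth inE; case: (q' == p); rewrite ?eqxx.
  by move=> q'; rewrite /pth; case: (eqVneq q' p) => [->|]; rewrite ?eqxx // /plen Sp.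
  apply: gen_mono (long_path A1 HP Vq Hq) => y [x [[i ->] ->]]; by exists i.
split.
  by rewrite /= card_sum !card_prod !card_ord subn1.
split.
  split.
  - by move=> i; apply: is_elt_thS.
  - by move=> i; apply: uniform_thS.
  - by [].
  move=> T nT Hgen; apply: (Hmin T nT).
  have [j _ jT] : exists2 j, j \in setT & j \notin T.
    by apply/subsetPn; rewrite subTset.
  have [v0 _] := Hun j.
  move=> f; split; last first.
    by apply: gen_mono => x [i _ ->]; exists i.
  apply: gen_sub => s [i ->].
  have G : gen_ideal (fun x => exists2 k, k \in T & x = gt k) (gt i).
    by apply/Hgen; apply: gen_self; exists i.
  have := gen_untheta A1 v0 (S := fun x => exists2 k, k \in T & x = g k) _ G.
  move=> G'; apply: gen_ext (G' _) => [q|]; first by rewrite /gt (thS_img A1).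
  move=> y [k kT ->]; split; last by exists (g k).
  exists k => //; apply: functional_extensionality => p; by rewrite /gt (thS_img A1).
split.
  move=> [S [HS HG]]; exists (fun y => exists x, S x /\ y = @thetaS K Q A x); split.
    move=> y [x [/HS [Ex [d Hd]] ->]]; split; first exact: is_elt_thS.
    by exists (d * A)%N; apply: lhom_thS.
  apply: transfer => //; first by move=> x Sx; apply: gen_self; exists x.
  by move=> y [x [Sx ->]]; exists x.
split.
  move=> d [S [HS HG]]; exists (fun y => exists x, S x /\ y = @thetaS K Q A x); split.
    move=> y [x [/HS [Ex Hd] ->]]; split; first exact: is_elt_thS.
    exact: lhom_thS.
  apply: transfer => //; first by move=> x Sx; apply: gen_self; exists x.
  by move=> y [x [Sx ->]]; exists x.
move=> [S [HS HG]].
exists (fun y => exists p, [/\ valid p, S (pth K p) & y = pth K (theta_path A p)]); split.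
  by move=> y [p [Vp _ ->]]; exists (theta_path A p); rewrite (valid_theta A1).
apply: transfer => //.
  move=> x Sx; have [p [Vp Ex]] := HS x Sx.
  apply: gen_ext (gen_self _) => [q|]; first by rewrite Ex (thS_pth K A1).
  by exists p; rewrite -Ex.
move=> y [p [Vp Sp ->]]; exists (pth K p); split => // q.
by rewrite (thS_pth K A1).
Qed.
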